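(* Let $r\ge 1$ be real and $n\ge1$ an integer. Then $$\frac{n}{n+1}\left(1+\frac{1}{n(n+2)}\right)^{1/r}\le \left(\frac{(n+1)\sum_{i=1}^{n} i^r}{n\sum_{i=1}^{n+1} i^r}\right)^{1/r}\le \frac{n}{n+1}\left(1+\frac{(n+1)^{r+1}-\sum_{i=1}^{n+1} i^r}{n^2\sum_{i=1}^{n+1} i^r}\right)^{1/r}.$$ If $0<r\le 1$, both inequalities hold with $\le$ replaced by $\ge$. *)

(* Defs.v *)
From Stdlib Require Import Reals.
Open Scope R_scope.

(* powsum n r = sum_{i=1}^{n} i^r  (real exponent r; i >= 1 so Rpower is the usual power) *)
Fixpoint powsum (n : nat) (r : R) : R :=
  match n with
  | O => 0
  | S m => powsum m r + Rpower (INR (S m)) r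
  end.

Definition mid (n : nat) (r : R) : R :=
  Rpower ((INR n + 1) * powsum n r / (INR n * powsum (S n) r)) (/ r).

Definition lowb (n : nat) (r : R) : R :=
  INR n / (INR n + 1) * Rpower (1 + / (INR n * (INR n + 2))) (/ r).

Definition uppb (n : nat) (r : R) : R :=
  INR n / (INR n + 1) *
  Rpower (1 + (Rpower (INR n + 1) (r + 1) - powsum (S n) r)
                / (INR n ^ 2 * powsum (S n) r)) (/ r).

(* Main.v *)
Require Import Defs.
From Stdlib Require Import Reals Lra Lia Psatz.
Open Scope R_scope.

Lemma rp_pos x y : 0 < Rpower x y.
Proof. unfold Rpower; apply exp_pos. Qed.

Lemma conc_bern p s : 0 < p <= 1 -> 0 < s -> Rpower s p <= 1 + p * (s - 1).
Proof.
  intros [hp0 hp1] hs. unfold Rpower.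
  set (m := p * ln s).
  assert (e1 : s = exp m * exp (ln s - m)).
  { rewrite <- exp_plus. replace (m + (ln s - m)) with (ln s) by ring. now rewrite exp_ln. }
  assert (e2 : 1 = exp m * exp (- m)).
  { rewrite <- exp_plus. replace (m + - m) with 0 by ring. now rewrite exp_0. }
  pose proof (exp_ineq1_le (ln s - m)) as h1.
  pose proof (exp_ineq1_le (- m)) as h2.
  pose proof (exp_pos m) as hm.
  assert (h3 : exp m * (1 + (ln s - m)) <= s) by (rewrite e1 at 2; nra).
  assert (h4 : exp m * (1 + - m) <= 1) by (rewrite e2 at 2; nra).
  assert (h5 : p * (exp m * (1 + (ln s - m))) + (1 - p) * (exp m * (1 + - m)) = exp m)
    by (unfold m; ring).
  nra.
Qed.

Lemma conv_bern r t : 1 <= r -> 0 < t -> 1 + r * (t - 1) <= Rpower t r.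
Proof.
  intros hr ht.
  assert (hp : 0 < / r <= 1).
  { split. apply Rinv_0_lt_compat; lra.
    rewrite <- Rinv_1. apply Rinv_le_contravar; lra. }
  pose proof (conc_bern (/ r) (Rpower t r) hp (rp_pos _ _)) as h.
  rewrite Rpower_mult, Rinv_r, Rpower_1 in h by lra.
  assert (r * t <= r * (1 + / r * (Rpower t r - 1))) by (apply Rmult_le_compat_l; lra).
  replace (r * (1 + / r * (Rpower t r - 1))) with (r + (Rpower t r - 1)) in H
    by (field; lra).
  lra.
Qed.

Lemma rp_div u v r : 0 < u -> 0 < v -> Rpower u r = Rpower v r * Rpower (u / v) r.
Proof.
  intros hu hv. rewrite Rpower_mult_distr; try lra.
  - f_equal. field. lra.
  - apply Rdiv_lt_0_compat; lra.
Qed.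

Lemma tan1 r u v : 1 <= r -> 0 < u -> 0 < v ->
  Rpower v r * (1 + r * (u / v - 1)) <= Rpower u r.
Proof.
  intros hr hu hv. rewrite (rp_div u v r) by lra.
  apply Rmult_le_compat_l. left; apply rp_pos.
  apply conv_bern; auto. apply Rdiv_lt_0_compat; lra.
Qed.

Lemma tan2 r u v : 0 < r <= 1 -> 0 < u -> 0 < v ->
  Rpower u r <= Rpower v r * (1 + r * (u / v - 1)).
Proof.
  intros hr hu hv. rewrite (rp_div u v r) by lra.
  apply Rmult_le_compat_l. left; apply rp_pos.
  apply conc_bern; auto. apply Rdiv_lt_0_compat; lra.
Qed.

Lemma jens_aux r X A B wa wb : 0 < X -> wa * A + wb * B = (wa + wb) * X ->
  wa * (Rpower X r * (1 + r * (A / X - 1))) + wb * (Rpower X r * (1 + r * (B / X - 1)))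
  = (wa + wb) * Rpower X r.
Proof.
  intros hX h.
  assert (e : wa * (A / X - 1) + wb * (B / X - 1) = 0).
  { replace (wa * (A / X - 1) + wb * (B / X - 1)) with ((wa * A + wb * B - (wa + wb) * X) / X)
      by (field; lra). rewrite h. field; lra. }
  transitivity ((wa + wb) * Rpower X r + Rpower X r * r * (wa * (A / X - 1) + wb * (B / X - 1))).
  ring. rewrite e. ring.
Qed.

Lemma jens1 r X A B wa wb : 1 <= r -> 0 < X -> 0 < A -> 0 < B -> 0 <= wa -> 0 <= wb ->
  wa * A + wb * B = (wa + wb) * X ->
  (wa + wb) * Rpower X r <= wa * Rpower A r + wb * Rpower B r.
Proof.
  intros hr hX hA hB ha hb h. rewrite <- (jens_aux r X A B wa wb) by auto.
  pose proof (tan1 r A X hr hA hX). pose proof (tan1 r B X hr hB hX).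
  apply Rplus_le_compat; apply Rmult_le_compat_l; auto.
Qed.

Lemma jens2 r X A B wa wb : 0 < r <= 1 -> 0 < X -> 0 < A -> 0 < B -> 0 <= wa -> 0 <= wb ->
  wa * A + wb * B = (wa + wb) * X ->
  wa * Rpower A r + wb * Rpower B r <= (wa + wb) * Rpower X r.
Proof.
  intros hr hX hA hB ha hb h. rewrite <- (jens_aux r X A B wa wb) by auto.
  pose proof (tan2 r A X hr hA hX). pose proof (tan2 r B X hr hB hX).
  apply Rplus_le_compat; apply Rmult_le_compat_l; auto.
Qed.

Lemma rp1 r : Rpower 1 r = 1.
Proof. unfold Rpower. rewrite ln_1, Rmult_0_r. apply exp_0. Qed.

Lemma rpm x y r : 0 < x -> 0 < y -> Rpower (x * y) r = Rpower x r * Rpower y r.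
Proof. intros; symmetry; apply Rpower_mult_distr; auto. Qed.

Lemma key1a r n k : 1 <= r -> (1 <= n)%nat -> (k <= n)%nat ->
  (INR n + 1) * Rpower (INR n) r * powsum (S k) r <=
  Rpower (INR n + 1) r * ((INR n + 2) * powsum k r + (INR n - INR k) * Rpower (INR (S k)) r).
Proof.
  intros hr hn. assert (hN : 1 <= INR n) by (apply (le_INR 1); auto).
  induction k as [|k IH]; intros hk.
  - simpl powsum. replace (INR 1) with 1 by reflexivity. rewrite rp1. simpl INR.
    pose proof (tan1 r (INR n + 1) (INR n) hr ltac:(lra) ltac:(lra)) as h.
    replace (1 + r * ((INR n + 1) / INR n - 1)) with ((INR n + r) / INR n) in h by (field; lra).
    assert (ha := rp_pos (INR n) r).
    assert (h2 : Rpower (INR n) r * ((INR n + r) / INR n) * INR n = Rpower (INR n) r * (INR n + r))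
      by (field; lra).
    assert (h3 : Rpower (INR n) r * ((INR n + r) / INR n) * INR n <= Rpower (INR n + 1) r * INR n)
      by (apply Rmult_le_compat_r; lra).
    rewrite h2 in h3. clear h h2. assert (Rpower (INR n) r * (INR n + 1) <= Rpower (INR n) r * (INR n + r)) by (apply Rmult_le_compat_l; lra). lra.
  - assert (IH' := IH ltac:(lia)).
    change (powsum (S (S k)) r) with (powsum (S k) r + Rpower (INR (S (S k))) r).
    change (powsum (S k) r) with (powsum k r + Rpower (INR (S k)) r) in *.
    rewrite !S_INR in *.
    assert (hK : INR k + 1 <= INR n) by (rewrite <- !S_INR; apply le_INR; lia).
    assert (hK0 := pos_INR k).
    pose proof (jens1 r (INR n * (INR k + 1 + 1)) ((INR n + 1) * (INR k + 1)) ((INR n + 1) * (INR k + 1 + 1))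
      (INR k + 1 + 1) (INR n - (INR k + 1)) hr ltac:(nra) ltac:(nra) ltac:(nra) ltac:(lra) ltac:(lra) ltac:(ring)) as J.
    rewrite !rpm in J by lra.
    nra.
Qed.

Lemma key1b r n k : 0 < r <= 1 -> (1 <= n)%nat -> (k <= n)%nat ->
  Rpower (INR n + 1) r * ((INR n + 2) * powsum k r + (INR n - INR k) * Rpower (INR (S k)) r)
  <= (INR n + 1) * Rpower (INR n) r * powsum (S k) r.
Proof.
  intros hr hn. assert (hN : 1 <= INR n) by (apply (le_INR 1); auto).
  induction k as [|k IH]; intros hk.
  - simpl powsum. replace (INR 1) with 1 by reflexivity. rewrite rp1. simpl INR.
    pose proof (tan2 r (INR n + 1) (INR n) hr ltac:(lra) ltac:(lra)) as h.
    replace (1 + r * ((INR n + 1) / INR n - 1)) with ((INR n + r) / INR n) in h by (field; lra).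
    assert (ha := rp_pos (INR n) r).
    assert (h2 : Rpower (INR n) r * ((INR n + r) / INR n) * INR n = Rpower (INR n) r * (INR n + r))
      by (field; lra).
    assert (h3 : Rpower (INR n + 1) r * INR n <= Rpower (INR n) r * ((INR n + r) / INR n) * INR n)
      by (apply Rmult_le_compat_r; lra).
    rewrite h2 in h3. clear h h2. assert (Rpower (INR n) r * (INR n + r) <= Rpower (INR n) r * (INR n + 1)) by (apply Rmult_le_compat_l; lra). lra.
  - assert (IH' := IH ltac:(lia)).
    change (powsum (S (S k)) r) with (powsum (S k) r + Rpower (INR (S (S k))) r).
    change (powsum (S k) r) with (powsum k r + Rpower (INR (S k)) r) in *.
    rewrite !S_INR in *.
    assert (hK : INR k + 1 <= INR n) by (rewrite <- !S_INR; apply le_INR; lia).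
    assert (hK0 := pos_INR k).
    pose proof (jens2 r (INR n * (INR k + 1 + 1)) ((INR n + 1) * (INR k + 1)) ((INR n + 1) * (INR k + 1 + 1))
      (INR k + 1 + 1) (INR n - (INR k + 1)) hr ltac:(nra) ltac:(nra) ltac:(nra) ltac:(lra) ltac:(lra) ltac:(ring)) as J.
    rewrite !rpm in J by lra.
    nra.
Qed.

Lemma key2a r m k : 1 <= r -> (k <= m)%nat ->
  INR (S m) * Rpower (INR (S (S m))) r * powsum k r <=
  Rpower (INR (S m)) r * (INR m * powsum k r + INR k * Rpower (INR (S k)) r).
Proof.
  intros hr. induction k as [|k IH]; intros hk.
  - simpl powsum. simpl INR. lra.
  - assert (IH' := IH ltac:(lia)).
    change (powsum (S k) r) with (powsum k r + Rpower (INR (S k)) r) in *.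
    rewrite !S_INR in *.
    assert (hK : INR k + 1 <= INR m) by (rewrite <- !S_INR; apply le_INR; lia).
    assert (hK0 := pos_INR k).
    pose proof (jens1 r ((INR k + 1) * (INR m + 1 + 1)) ((INR k + 1) * (INR m + 1)) ((INR k + 1 + 1) * (INR m + 1))
      (INR m - INR k) (INR k + 1) hr ltac:(nra) ltac:(nra) ltac:(nra) ltac:(lra) ltac:(lra) ltac:(ring)) as J.
    rewrite !rpm in J by lra.
    nra.
Qed.

Lemma key2b r m k : 0 < r <= 1 -> (k <= m)%nat ->
  Rpower (INR (S m)) r * (INR m * powsum k r + INR k * Rpower (INR (S k)) r) <=
  INR (S m) * Rpower (INR (S (S m))) r * powsum k r.
Proof.
  intros hr. induction k as [|k IH]; intros hk.
  - simpl powsum. simpl INR. lra.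
  - assert (IH' := IH ltac:(lia)).
    change (powsum (S k) r) with (powsum k r + Rpower (INR (S k)) r) in *.
    rewrite !S_INR in *.
    assert (hK : INR k + 1 <= INR m) by (rewrite <- !S_INR; apply le_INR; lia).
    assert (hK0 := pos_INR k).
    pose proof (jens2 r ((INR k + 1) * (INR m + 1 + 1)) ((INR k + 1) * (INR m + 1)) ((INR k + 1 + 1) * (INR m + 1))
      (INR m - INR k) (INR k + 1) hr ltac:(nra) ltac:(nra) ltac:(nra) ltac:(lra) ltac:(lra) ltac:(ring)) as J.
    rewrite !rpm in J by lra.
    nra.
Qed.

Lemma ukey_a r n : 1 <= r -> (1 <= n)%nat ->
  INR n * Rpower (INR n + 1) r * (powsum n r - Rpower (INR n) r) <=
  (INR n - 1) * Rpower (INR n) r * powsum n r.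
Proof.
  intros hr hn. destruct n as [|m]; [lia|].
  pose proof (key2a r m m hr (le_n _)) as h.
  change (powsum (S m) r) with (powsum m r + Rpower (INR (S m)) r).
  rewrite (S_INR (S m)) in h.
  set (a := Rpower (INR (S m)) r) in *. set (b := Rpower (INR (S m) + 1) r) in *.
  rewrite S_INR in *. nra.
Qed.

Lemma ukey_b r n : 0 < r <= 1 -> (1 <= n)%nat ->
  (INR n - 1) * Rpower (INR n) r * powsum n r <=
  INR n * Rpower (INR n + 1) r * (powsum n r - Rpower (INR n) r).
Proof.
  intros hr hn. destruct n as [|m]; [lia|].
  pose proof (key2b r m m hr (le_n _)) as h.
  change (powsum (S m) r) with (powsum m r + Rpower (INR (S m)) r).
  rewrite (S_INR (S m)) in h.
  set (a := Rpower (INR (S m)) r) in *. set (b := Rpower (INR (S m) + 1) r) in *.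
  rewrite S_INR in *. nra.
Qed.

Lemma powsum_nonneg r n : 0 <= powsum n r.
Proof. induction n as [|n IH]. simpl; lra. change (powsum (S n) r) with (powsum n r + Rpower (INR (S n)) r).
  pose proof (rp_pos (INR (S n)) r). lra. Qed.

Lemma powsum_pos r n : (1 <= n)%nat -> 0 < powsum n r.
Proof. destruct n; [lia|]. intros _. change (powsum (S n) r) with (powsum n r + Rpower (INR (S n)) r). pose proof (powsum_nonneg r n).
  pose proof (rp_pos (INR (S n)) r). lra. Qed.

Lemma powsum_le r n : 0 < r -> powsum n r <= INR n * Rpower (INR n) r.
Proof.
  intros hr. induction n as [|n IH]. simpl; lra.
  change (powsum (S n) r) with (powsum n r + Rpower (INR (S n)) r).
  destruct n as [|n].
  - simpl powsum. change (INR 1) with 1. rewrite rp1. lra.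
  - assert (0 < INR (S n)) by (apply lt_0_INR; lia).
    assert (Rpower (INR (S n)) r <= Rpower (INR (S (S n))) r)
      by (apply Rle_Rpower_l; [lra|]; split; [lra|]; apply le_INR; lia).
    rewrite (S_INR (S n)) at 2. nra.
Qed.

Lemma divnn x y : 0 <= x -> 0 < y -> 0 <= x / y.
Proof. intros. unfold Rdiv. apply Rmult_le_pos; auto. left; apply Rinv_0_lt_compat; auto. Qed.

Lemma divnp x y : x <= 0 -> 0 < y -> x / y <= 0.
Proof. intros. unfold Rdiv. assert (0 < / y) by (apply Rinv_0_lt_compat; auto). nra. Qed.

Theorem corollary2p3 (r : R) (n : nat) (hn : (1 <= n)%nat) :
  (1 <= r -> lowb n r <= mid n r /\ mid n r <= uppb n r) /\
  (0 < r <= 1 -> lowb n r >= mid n r /\ mid n r >= uppb n r).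
Proof.
  assert (hN : 1 <= INR n) by (apply (le_INR 1); auto).
  assert (hS := powsum_pos r n hn).
  assert (hS1 : powsum (S n) r = powsum n r + Rpower (INR n + 1) r)
    by (change (powsum (S n) r) with (powsum n r + Rpower (INR (S n)) r); now rewrite S_INR).
  assert (hb := rp_pos (INR n + 1) r). assert (ha := rp_pos (INR n) r).
  assert (hab : Rpower (INR n) r = Rpower (INR n + 1) r * Rpower (INR n / (INR n + 1)) r)
    by (apply rp_div; lra).
  assert (hpl : Rpower (INR n + 1) (r + 1) = Rpower (INR n + 1) r * (INR n + 1))
    by (rewrite Rpower_plus, Rpower_1; lra).
  assert (K1a := fun h => key1a r n n h hn (le_n _)).
  assert (K1b := fun h => key1b r n n h hn (le_n _)).
  assert (K2a := fun h => ukey_a r n h hn).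
  assert (K2b := fun h => ukey_b r n h hn).
  assert (hSle := fun h => powsum_le r n h).
  unfold lowb, uppb, mid. rewrite hS1, hpl. rewrite hS1, S_INR in K1a, K1b.
  set (N := INR n) in *. set (S := powsum n r) in *.
  set (a := Rpower N r) in *. set (b := Rpower (N + 1) r) in *.
  replace (N - N) with 0 in K1a, K1b by ring.
  assert (hq : Rpower (N / (N + 1)) r = a / b) by (rewrite hab; field; lra).
  assert (hc : forall r', r' * r = 1 -> N / (N + 1) = Rpower (a / b) r').
  { intros r' e. rewrite <- hq, Rpower_mult, Rmult_comm, e, Rpower_1; auto.
    apply Rdiv_lt_0_compat; lra. }
  assert (Lpos : 0 < 1 + / (N * (N + 2))) by (assert (0 < / (N * (N + 2))) by (apply Rinv_0_lt_compat; nra); lra).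
  assert (abpos : 0 < a / b) by (apply Rdiv_lt_0_compat; lra).
  assert (Qpos : 0 < (N + 1) * S / (N * (S + b))) by (apply Rdiv_lt_0_compat; nra).
  assert (EL : (N + 1) * S / (N * (S + b)) - a / b * (1 + / (N * (N + 2))) =
     (N + 1) * (b * (N + 2) * S - (N + 1) * a * (S + b)) / (N * b * (N + 2) * (S + b)))
    by (field; repeat split; nra).
  assert (EU : a / b * (1 + (b * (N + 1) - (S + b)) / (N ^ 2 * (S + b))) - (N + 1) * S / (N * (S + b)) =
     (N + 1) * ((N - 1) * a * S - N * b * (S - a)) / (b * N ^ 2 * (S + b)))
    by (field; repeat split; nra).
  assert (Dpos : 0 < N * b * (N + 2) * (S + b)) by (apply Rmult_lt_0_compat; nra).
  assert (Dpos2 : 0 < b * N ^ 2 * (S + b)) by (apply Rmult_lt_0_compat; [apply Rmult_lt_0_compat|]; nra).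
  assert (Upos : 0 < r -> 0 < 1 + (b * (N + 1) - (S + b)) / (N ^ 2 * (S + b))).
  { intros hr. specialize (hSle hr). assert (a <= b).
    { apply Rle_Rpower_l; lra. }
    assert (0 <= (b * (N + 1) - (S + b)) / (N ^ 2 * (S + b))).
    { apply divnn; nra. } lra. }
  split; intros hr.
  - assert (hr0 : 0 < r) by lra.
    rewrite (hc (/ r)) by (field; lra).
    rewrite !Rpower_mult_distr by (auto; apply Upos; lra).
    split; apply Rle_Rpower_l; try (left; apply Rinv_0_lt_compat; lra).
    + split. apply Rmult_lt_0_compat; auto.
      assert (0 <= (N + 1) * (b * (N + 2) * S - (N + 1) * a * (S + b)) / (N * b * (N + 2) * (S + b))).
      { apply divnn; [|lra]. specialize (K1a hr). nra. }
      lra.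
    + split. auto.
      assert (0 <= (N + 1) * ((N - 1) * a * S - N * b * (S - a)) / (b * N ^ 2 * (S + b))).
      { apply divnn; [|lra]. specialize (K2a hr). nra. }
      lra.
  - assert (hr0 : 0 < r) by lra.
    rewrite (hc (/ r)) by (field; lra).
    rewrite !Rpower_mult_distr by (auto; apply Upos; lra).
    split; apply Rle_ge, Rle_Rpower_l; try (left; apply Rinv_0_lt_compat; lra).
    + split. auto.
      assert ((N + 1) * (b * (N + 2) * S - (N + 1) * a * (S + b)) / (N * b * (N + 2) * (S + b)) <= 0).
      { apply divnp; [|lra]. specialize (K1b hr). nra. }
      lra.
    + split. apply Rmult_lt_0_compat; [auto | apply Upos; lra].
      assert ((N + 1) * ((N - 1) * a * S - N * b * (S - a)) / (b * N ^ 2 * (S + b)) <= 0).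
      { apply divnp; [|lra]. specialize (K2b hr). nra. }
      lra.
Qed.
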